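(* Let $n_1,m_1\ge1$, $M\ge n_1+m_1$ and $c_1\ge0$ be integers. Let $T$ be the rooted tree consisting of a path of $M-m_1-n_1$ edges from the root down to a vertex $A$, followed below $A$ by two branches: a left path of $n_1$ edges ending at a leaf of capacity $c_1$, and a right path of $m_1$ edges ending at a leaf of capacity $c_2=c_1+n_1$. Let $T'$ be a path of $M$ edges from the root ending at a leaf of capacity $c_1$. Then $$G(T)=\genfrac{[}{]}{0pt}{}{n_1+m_1}{n_1}\,G(T').$$
   Context: $[n]=\sum_{i=0}^{n-1}q^i$, $[n]!=\prod_{i=1}^n[i]$, $\genfrac{[}{]}{0pt}{}{n}{k}=[n]!/([k]![n-k]!)$. For a rooted tree whose leaves carry non-negative integer capacities, a labelling of Lascoux--Sch\''utzenberger type is an assignment of non-negative integers to edges such that labels are weakly increasing along every path going away from the root, and the label of the edge incident to each leaf is at most that leaf's capacity. $G(T)=\sum q^{\text{(sum of labels)}}$ over all such labellings. *)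

(* Defs.v *)
From mathcomp Require Import all_boot all_algebra.
Set Implicit Arguments. Unset Strict Implicit. Unset Printing Implicit Defensive.
Import GRing.Theory.
Local Open Scope ring_scope.

Definition qint (n : nat) : {poly rat} := \sum_(i < n) 'X^i.
Definition qfact (n : nat) : {poly rat} := \prod_(1 <= i < n.+1) qint i.
Definition qbinom (n k : nat) : {poly rat} := qfact n %/ (qfact k * qfact (n - k)).

(* A tree denotes its root vertex together with the subtrees hanging below it;
   each element of the child list is joined to the vertex by one edge.
   [Leaf c] is a leaf vertex carrying capacity c. *)
Inductive tree : Type :=
| Leaf of nat
| Node of seq tree.

Inductive ltree : Type :=
| LLeaf
| LNode of seq (nat * ltree).

Fixpoint labs (B : nat) (t : tree) : seq ltree :=
  match t with
  | Leaf _ => [:: LLeaf]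
  | Node ts =>
      let fix go (ts : seq tree) : seq (seq (nat * ltree)) :=
        match ts with
        | [::] => [:: [::]]
        | t' :: ts' =>
            [seq p :: r | p <- [seq (a, l) | a <- iota 0 B.+1, l <- labs B t'],
                          r <- go ts']
        end in
      map LNode (go ts)
  end.

(* [lsub t L a]: L is a labelling of (the edges below the root of) t, where the
   edge joining t to its parent has label a; labels weakly increase going away
   from the root, and the label of an edge incident to a leaf of capacity c is
   at most c. *)
Fixpoint lsub (t : tree) (L : ltree) (a : nat) {struct t} : bool :=
  match t, L with
  | Leaf c, LLeaf => (a <= c)%N
  | Node ts, LNode ls =>
      let fix go (ts : seq tree) (ls : seq (nat * ltree)) : bool :=
        match ts, ls with
        | [::], [::] => true
        | t' :: ts', (b, L') :: ls' => [&& (a <= b)%N, lsub t' L' b & go ts' ls']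
        | _, _ => false
        end in
      go ts ls
  | _, _ => false
  end.

(* Lascoux--Schuetzenberger labellings of the rooted tree t (there is no edge
   above the root, so the lower bound there is the trivial bound 0). *)
Definition LS_labelling (t : tree) (L : ltree) : bool := lsub t L 0.

Fixpoint wt (L : ltree) : nat :=
  match L with
  | LLeaf => 0
  | LNode ls =>
      let fix go (ls : seq (nat * ltree)) : nat :=
        match ls with
        | [::] => 0
        | (b, L') :: ls' => b + wt L' + go ls'
        end in
      go ls
  end.

(* maximal leaf capacity: every label of an LS labelling of a tree all of whose
   maximal downward paths end in a capacitated leaf is bounded by it. *)
Fixpoint maxcap (t : tree) : nat :=
  match t with
  | Leaf c => c
  | Node ts =>
      let fix go (ts : seq tree) : nat :=
        match ts with
        | [::] => 0
        | t' :: ts' => maxn (maxcap t') (go ts')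
        end in
      go ts
  end.

Definition G (t : tree) : {poly rat} :=
  \sum_(L <- labs (maxcap t) t | LS_labelling t L) 'X^(wt L).

Fixpoint chain (k : nat) (t : tree) : tree :=
  match k with
  | 0 => t
  | k'.+1 => Node [:: chain k' t]
  end.

Definition treeT (M n1 m1 c1 : nat) : tree :=
  chain (M - m1 - n1)
    (Node [:: chain n1.-1 (Leaf c1); chain m1.-1 (Leaf (c1 + n1))]).

Definition treeT' (M c1 : nat) : tree := chain M (Leaf c1).

(* Main.v *)
Require Import Defs.
From mathcomp Require Import all_boot all_algebra ring zify.
Import GRing.Theory.
Local Open Scope ring_scope.
Definition F B t a : {poly rat} := \sum_(L <- labs B t | lsub t L a) 'X^(wt L).

Lemma labs1 B t : labs B (Node [:: t]) = map LNode
  [seq p :: r | p <- [seq (x, l) | x <- iota 0 B.+1, l <- labs B t], r <- [:: [::]]].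
Proof. by []. Qed.

Lemma labs2 B t1 t2 : labs B (Node [:: t1; t2]) = map LNode
  [seq p :: r | p <- [seq (x, l) | x <- iota 0 B.+1, l <- labs B t1],
      r <- [seq p :: r | p <- [seq (x, l) | x <- iota 0 B.+1, l <- labs B t2], r <- [:: [::]]]].
Proof. by []. Qed.

Lemma F_node1 B t a : F B (Node [:: t]) a =
  \sum_(0 <= b < B.+1 | (a <= b)%N) 'X^b * F B t b.
Proof.
rewrite /F labs1 big_map big_mkcond big_allpairs_dep.
rewrite /index_iota subn0 big_allpairs_dep.
rewrite [RHS]big_mkcond; apply: eq_bigr => x _.
case: (leqP a x) => hx.
  rewrite mulr_sumr [RHS]big_mkcond; apply: eq_bigr => l _.
  rewrite big_seq1 /= hx /= andbT; case: ifP => _ //.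
  by rewrite -exprD addr0.
by apply: big1 => l _; rewrite big_seq1 /= leqNgt hx.
Qed.

Lemma F_node2 B t1 t2 a : F B (Node [:: t1; t2]) a =
  (\sum_(0 <= b < B.+1 | (a <= b)%N) 'X^b * F B t1 b) *
  (\sum_(0 <= b < B.+1 | (a <= b)%N) 'X^b * F B t2 b).
Proof.
rewrite /F labs2 big_map big_mkcond big_allpairs_dep.
rewrite /index_iota subn0 big_allpairs_dep.
rewrite big_distrl [RHS]big_mkcond; apply: eq_bigr => x _.
case: (leqP a x) => hx; last first.
  apply: big1 => l _; apply: big1 => r _; by rewrite /= leqNgt hx.
rewrite !mulr_sumr big_distrl [RHS]big_mkcond; apply: eq_bigr => l _.
case: (boolP (lsub t1 l x)) => hl; last first.
  by apply: big1 => r _; rewrite /= hx (negbTE hl).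
rewrite big_allpairs_dep big_allpairs_dep big_distrr [RHS]big_mkcond; apply: eq_bigr => y _.
case: (leqP a y) => hy; last first.
  by apply: big1 => r _; rewrite big_seq1 /= hx hl leqNgt hy.
rewrite /= [X in _ * X]mulr_sumr [RHS]mulr_sumr [RHS]big_mkcond; apply: eq_bigr => l2 _.
rewrite big_seq1 /= hx hl hy /= andbT.
case: ifP => _ //.
by rewrite -!exprD addr0.
Qed.

Lemma F_leaf B c a : F B (Leaf c) a = if (a <= c)%N then 1 else 0.
Proof. by rewrite /F /= big_cons big_nil /=; case: ifP; rewrite ?addr0. Qed.

Fixpoint P (k a c : nat) : {poly rat} :=
  match k with
  | 0 => if (a <= c)%N then 1 else 0
  | k'.+1 => \sum_(a <= b < c.+1) 'X^b * P k' b c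
  end.

Lemma P_gt k a c : (c < a)%N -> P k a c = 0.
Proof. by case: k => [|k] h /=; [rewrite leqNgt h | rewrite big_geq]. Qed.

Lemma conv B a c (f : nat -> {poly rat}) : (c <= B)%N -> (forall b, (c < b)%N -> f b = 0) ->
  \sum_(0 <= b < B.+1 | (a <= b)%N) 'X^b * f b = \sum_(a <= b < c.+1) 'X^b * f b.
Proof.
move=> cB hf.
rewrite (@big_nat_widenl _ _ _ a 0) // (@big_nat_widen _ _ _ 0 c.+1 B.+1) //.
rewrite [LHS]big_mkcond [RHS]big_mkcond; apply: eq_bigr => b _ /=.
case: (a <= b)%N => //=; case: ltnP => // hb.
by rewrite hf ?mulr0.
Qed.

Lemma P_shift k a c : P k a.+1 c.+1 = 'X^k * P k a c.
Proof.
elim: k a => [|k IH] a /=; first by rewrite ltnS expr0 mul1r.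
rewrite big_add1 /= mulr_sumr; apply: eq_bigr => b _.
by rewrite IH !mulrA -!exprD !addSn (addnC b).
Qed.

Lemma P_shiftn k a d : P k a (a + d) = 'X^(k * a) * P k 0 d.
Proof.
elim: a => [|a IH]; first by rewrite muln0 expr0 mul1r add0n.
by rewrite addSn P_shift IH mulrA -exprD mulnS.
Qed.

Lemma P_zero k : P k 0 0 = 1.
Proof. by elim: k => [|k IH] //=; rewrite big_nat1 expr0 mul1r. Qed.

Lemma P0 a c : (a <= c)%N -> P 0 a c = 1.
Proof. by move=> /= ->. Qed.

Lemma A_rec k d : P k.+1 0 d.+1 = P k 0 d.+1 + 'X^(k.+1) * P k.+1 0 d.
Proof. by rewrite -P_shift /= big_ltn // expr0 mul1r. Qed.

Lemma qint_add a b : qint (a + b) = qint a + 'X^a * qint b.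
Proof.
rewrite /qint big_split_ord mulr_sumr; congr (_ + _).
by apply: eq_bigr => i _; rewrite exprD.
Qed.

Lemma qfactS n : qfact n.+1 = qfact n * qint n.+1.
Proof. by rewrite /qfact big_nat_recr. Qed.

Lemma qfact0 : qfact 0 = 1.
Proof. by rewrite /qfact big_geq. Qed.

Lemma qint_neq0 n : qint n.+1 != 0.
Proof.
apply/eqP => h; have := congr1 (fun p : {poly rat} => p.[1]) h.
rewrite /qint horner_sum hornerC.
under eq_bigr => i _ do rewrite hornerXn expr1n.
by rewrite sumr_const card_ord => /eqP; rewrite Num.Theory.pnatr_eq0.
Qed.

Lemma qfact_neq0 n : qfact n != 0.
Proof.
elim: n => [|n IH]; first by rewrite qfact0 oner_eq0.
by rewrite qfactS mulf_neq0 ?qint_neq0.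
Qed.

Lemma A_fact k d : P k 0 d * qfact k * qfact d = qfact (k + d).
Proof.
elim: k d => [|k IHk] d; first by rewrite P0 // qfact0 !mul1r.
elim: d => [|d IHd]; first by rewrite P_zero qfact0 mul1r mulr1 addn0.
have e : P k.+1 0 d.+1 * qfact k.+1 * qfact d.+1 =
  (P k 0 d.+1 * qfact k * qfact d.+1) * qint k.+1 +
  'X^(k.+1) * (P k.+1 0 d * qfact k.+1 * qfact d) * qint d.+1.
  by rewrite A_rec !qfactS; ring.
rewrite e IHk IHd.
have -> : (k + d.+1 = (k + d).+1)%N by lia.
have -> : (k.+1 + d = (k + d).+1)%N by lia.
have -> : (k.+1 + d.+1 = (k + d).+2)%N by lia.
rewrite (qfactS (k + d).+1).
have -> : qint (k + d).+2 = qint k.+1 + 'X^(k.+1) * qint d.+1.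
  by rewrite -qint_add; congr qint; lia.
ring.
Qed.

Lemma qbinom_eq n m : qbinom (n + m) n = P n 0 m.
Proof.
by rewrite /qbinom addKn -(A_fact n m) -mulrA mulpK // mulf_neq0 // qfact_neq0.
Qed.

Lemma core n m d : P n 0 d * P m 0 (d + n) = P n 0 m * P (n + m) 0 d.
Proof.
have W0 : qfact n * qfact m * qfact d * qfact (d + n) != 0.
  by rewrite !mulf_neq0 // qfact_neq0.
apply: (mulIf W0).
have -> : P n 0 d * P m 0 (d + n) * (qfact n * qfact m * qfact d * qfact (d + n))
  = (P n 0 d * qfact n * qfact d) * (P m 0 (d + n) * qfact m * qfact (d + n)) by ring.
have -> : P n 0 m * P (n + m) 0 d * (qfact n * qfact m * qfact d * qfact (d + n))
  = (P n 0 m * qfact n * qfact m) * P (n + m) 0 d * qfact d * qfact (d + n) by ring.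
rewrite !A_fact.
have -> : qfact (n + m) * P (n + m) 0 d * qfact d * qfact (d + n)
  = (P (n + m) 0 d * qfact (n + m) * qfact d) * qfact (d + n) by ring.
rewrite A_fact (addnC d n) mulrC; congr (_ * _); congr qfact; lia.
Qed.
Lemma key n m a c : P n a c * P m a (c + n) = P n 0 m * P (n + m) a c.
Proof.
case: (leqP a c) => h; last first.
  by rewrite (@P_gt n a c h) (@P_gt (n + m) a c h) mul0r mulr0.
rewrite -(subnKC h); move: (c - a)%N => d.
rewrite -addnA.
rewrite (P_shiftn n a d) (P_shiftn m a (d + n)) (P_shiftn (n + m) a d).
rewrite mulnDl exprD.
move: ('X^(n * a)) ('X^(m * a)) => u v.
transitivity (u * v * (P n 0 d * P m 0 (d + n))); first by ring.
rewrite core; ring.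
Qed.

Lemma chainS k t : chain k.+1 t = Node [:: chain k t].
Proof. by []. Qed.

Lemma maxcap_chain k t : maxcap (chain k t) = maxcap t.
Proof. by elim: k => //= k IH; rewrite IH maxn0. Qed.

Lemma F_chain_leaf B k c a : (c <= B)%N -> F B (chain k (Leaf c)) a = P k a c.
Proof.
move=> cB; elim: k a => [|k IH] a; first by rewrite /= F_leaf.
rewrite chainS F_node1 (eq_bigr (fun b => 'X^b * P k b c)); last by move=> b _; rewrite IH.
by rewrite (@conv B a c _ cB (fun b h => @P_gt k b c h)).
Qed.

Lemma F_S B n m c a : (0 < n)%N -> (0 < m)%N -> (c + n <= B)%N ->
  F B (Node [:: chain n.-1 (Leaf c); chain m.-1 (Leaf (c + n))]) a =
  P n 0 m * P (n + m) a c.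
Proof.
move=> n0 m0 hB; have cB : (c <= B)%N by apply: leq_trans hB; rewrite leq_addr.
rewrite F_node2 -key.
rewrite [X in X * _](eq_bigr (fun b => 'X^b * P n.-1 b c)); last by move=> b _; rewrite F_chain_leaf.
rewrite [X in _ * X](eq_bigr (fun b => 'X^b * P m.-1 b (c + n))); last by move=> b _; rewrite F_chain_leaf.
rewrite (@conv B a c _ cB (fun b h => @P_gt n.-1 b c h)).
rewrite (@conv B a (c + n) _ hB (fun b h => @P_gt m.-1 b (c + n) h)).
by rewrite -(prednK n0) -(prednK m0).
Qed.

Lemma F_T B k n m c a : (0 < n)%N -> (0 < m)%N -> (c + n <= B)%N ->
  F B (chain k (Node [:: chain n.-1 (Leaf c); chain m.-1 (Leaf (c + n))])) a =
  P n 0 m * P (k + (n + m)) a c.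
Proof.
move=> n0 m0 hB; have cB : (c <= B)%N by apply: leq_trans hB; rewrite leq_addr.
elim: k a => [|k IH] a; first by rewrite F_S.
rewrite chainS F_node1 (eq_bigr (fun b => P n 0 m * ('X^b * P (k + (n + m)) b c))); last first.
  by move=> b _; rewrite IH mulrCA.
rewrite -big_distrr (@conv B a c _ cB (fun b h => @P_gt (k + (n + m)) b c h)).
by [].
Qed.

Theorem mainTheorem9 (n1 m1 M c1 : nat) :
  (1 <= n1)%N -> (1 <= m1)%N -> (n1 + m1 <= M)%N ->
  G (treeT M n1 m1 c1) = qbinom (n1 + m1) n1 * G (treeT' M c1).
Proof.
move=> n0 m0 hM.
have mc : maxcap (treeT M n1 m1 c1) = (c1 + n1)%N.
  rewrite /treeT maxcap_chain /= !maxcap_chain /= maxn0.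
  by apply/maxn_idPr; rewrite leq_addr.
rewrite /G -/(LS_labelling _) /LS_labelling.
change (\sum_(L <- labs (maxcap (treeT M n1 m1 c1)) (treeT M n1 m1 c1) | lsub (treeT M n1 m1 c1) L 0) 'X^(wt L))
  with (F (maxcap (treeT M n1 m1 c1)) (treeT M n1 m1 c1) 0).
change (\sum_(L <- labs (maxcap (treeT' M c1)) (treeT' M c1) | lsub (treeT' M c1) L 0) 'X^(wt L))
  with (F (maxcap (treeT' M c1)) (treeT' M c1) 0).
rewrite mc /treeT F_T // /treeT' maxcap_chain /= F_chain_leaf // qbinom_eq.
by have -> : (M - m1 - n1 + (n1 + m1) = M)%N by lia.
Qed.
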